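(* Let $(A,\diamond,\alpha)$ be a Hom-zinbiel algebra and let $(\prec_i,\succ_i)_{i\ge0}$ be a Hom-dendriform formal deformation of $A$. Define $x*y=x\succ_1 y-y\prec_1 x$ for $x,y\in A$. Then $(A,\diamond,*,\alpha)$ is a Hom-pre-Poisson algebra.
   Context: A Hom-zinbiel algebra $(A,\diamond,\alpha)$: bilinear $\diamond$, linear $\alpha$ with $\alpha(x\diamond y)=\alpha(x)\diamond\alpha(y)$ and $\alpha(x)\diamond(y\diamond z)=(x\diamond y)\diamond\alpha(z)+(y\diamond x)\diamond\alpha(z)$. A Hom-dendriform algebra $(D,\prec,\succ,\alpha)$: bilinear $\prec,\succ$ and linear $\alpha$ which is a morphism for both products, such that $(x\prec y)\prec\alpha(z)=\alpha(x)\prec(y\prec z+y\succ z)$, $(x\succ y)\prec\alpha(z)=\alpha(x)\succ(y\prec z)$, $\alpha(x)\succ(y\succ z)=(x\prec y+x\succ y)\succ\alpha(z)$. A Hom-dendriform formal deformation of $(A,\diamond,\alpha)$ is a sequence of bilinear maps $\prec_i,\succ_i:A\otimes A\to A$ ($i\ge0$) with $x\succ_0 y=y\prec_0 x=x\diamond y$, such that the $\mathbb{K}[[t]]$-bilinear products $x\prec_t y=\sum_{i\ge0}(x\prec_i y)t^i$, $x\succ_t y=\sum_{i\ge0}(x\succ_i y)t^i$ on $A[[t]]$, together with the $t$-linear extension of $\alpha$, form a Hom-dendriform algebra $(A[[t]],\prec_t,\succ_t,\alpha)$. A Hom-pre-Lie algebra $(A,*,\alpha)$: $\alpha(x*y)=\alpha(x)*\alpha(y)$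 and $(x*y)*\alpha(z)-\alpha(x)*(y*z)=(y*x)*\alpha(z)-\alpha(y)*(x*z)$. A Hom-pre-Poisson algebra $(A,\diamond,*,\alpha)$: $(A,\diamond,\alpha)$ Hom-zinbiel, $(A,*,\alpha)$ Hom-pre-Lie, and $(x*y-y*x)\diamond\alpha(z)=\alpha(x)*(y\diamond z)-\alpha(y)\diamond(x*z)$, $(x\diamond y+y\diamond x)*\alpha(z)=\alpha(x)\diamond(y*z)+\alpha(y)\diamond(x*z)$ for all $x,y,z$. *)

(* Defs.v *)
From HB Require Import structures.
From mathcomp Require Import all_boot all_order all_algebra.
Set Implicit Arguments. Unset Strict Implicit. Unset Printing Implicit Defensive.
Import GRing.Theory.
Local Open Scope ring_scope.

Section HomAlgebras.
Variables (K : fieldType) (A : lmodType K).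

Definition linear_map (f : A -> A) : Prop :=
  forall (a : K) (x y : A), f (a *: x + y) = a *: f x + f y.

Definition bilinear_map (f : A -> A -> A) : Prop :=
  (forall (a : K) (x y z : A), f (a *: x + y) z = a *: f x z + f y z) /\
  (forall (a : K) (x y z : A), f z (a *: x + y) = a *: f z x + f z y).

Definition is_hom_zinbiel (dm : A -> A -> A) (alpha : A -> A) : Prop :=
  [/\ bilinear_map dm, linear_map alpha,
      (forall x y, alpha (dm x y) = dm (alpha x) (alpha y)) &
      (forall x y z, dm (alpha x) (dm y z)
                     = dm (dm x y) (alpha z) + dm (dm y x) (alpha z))].

Definition is_hom_pre_Lie (st : A -> A -> A) (alpha : A -> A) : Prop :=
  [/\ bilinear_map st, linear_map alpha,
      (forall x y, alpha (st x y) = st (alpha x) (alpha y)) &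
      (forall x y z, st (st x y) (alpha z) - st (alpha x) (st y z)
                     = st (st y x) (alpha z) - st (alpha y) (st x z))].

Definition is_hom_pre_Poisson (dm st : A -> A -> A) (alpha : A -> A) : Prop :=
  [/\ is_hom_zinbiel dm alpha, is_hom_pre_Lie st alpha,
      (forall x y z, dm (st x y - st y x) (alpha z)
                     = st (alpha x) (dm y z) - dm (alpha y) (st x z)) &
      (forall x y z, st (dm x y + dm y x) (alpha z)
                     = dm (alpha x) (st y z) + dm (alpha y) (st x z))].

(** Formal power series A[[t]]: the series sum_n (u n) t^n is represented
    by its coefficient sequence u : nat -> A. *)
Definition series := nat -> A.

Definition ser_add (u v : series) : series := fun n => u n + v n.

Definition ser_map (alpha : A -> A) (u : series) : series := fun n => alpha (u n).

(** K[[t]]-bilinear extension of the product x op_t y = sum_i (x op_i y) t^i: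
    the coefficient of t^n in u op_t v is sum_{i+j+k=n} (u_j op_i v_k). *)
Definition ser_op (op : nat -> A -> A -> A) (u v : series) : series :=
  fun n => \sum_(i < n.+1) \sum_(j < (n - i).+1) op i (u j) (v (n - i - j)%N).

Definition is_hom_dendriform_ser (precT succT : series -> series -> series)
  (alphaT : series -> series) : Prop :=
  [/\ (forall u v, alphaT (precT u v) = precT (alphaT u) (alphaT v)),
      (forall u v, alphaT (succT u v) = succT (alphaT u) (alphaT v)),
      (forall u v w, precT (precT u v) (alphaT w)
                     = precT (alphaT u) (ser_add (precT v w) (succT v w))),
      (forall u v w, precT (succT u v) (alphaT w)
                     = succT (alphaT u) (precT v w)) &
      (forall u v w, succT (alphaT u) (succT v w)
                     = succT (ser_add (precT u v) (succT u v)) (alphaT w))].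

Definition is_hom_dend_deformation (dm : A -> A -> A) (alpha : A -> A)
  (prec succ : nat -> A -> A -> A) : Prop :=
  [/\ (forall i, bilinear_map (prec i)),
      (forall i, bilinear_map (succ i)),
      (forall x y, succ 0%N x y = dm x y),
      (forall x y, prec 0%N y x = dm x y) &
      is_hom_dendriform_ser (ser_op prec) (ser_op succ) (ser_map alpha)].

End HomAlgebras.

(* Main.v *)
Require Import Defs.
From mathcomp Require Import all_boot all_order all_algebra.
From mathcomp Require Import zify.
Import GRing.Theory.
Local Open Scope ring_scope.

(* reflexive normalizer for zmodType *)
Inductive ex := EAt of nat | EAdd of ex & ex | EOpp of ex | EZero.

Fixpoint eval (M : zmodType) (env : seq M) (e : ex) : M :=
  match e with
  | EAt n => nth 0 env n
  | EAdd a b => eval M env a + eval M env b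
  | EOpp a => - eval M env a
  | EZero => 0
  end.
Arguments eval {M} env e.

Fixpoint addl (s1 s2 : seq int) : seq int :=
  match s1, s2 with
  | [::], _ => s2
  | _, [::] => s1
  | a :: s1', b :: s2' => (a + b) :: addl s1' s2'
  end.

Fixpoint coefs (e : ex) : seq int :=
  match e with
  | EAt n => rcons (nseq n 0) 1
  | EAdd a b => addl (coefs a) (coefs b)
  | EOpp a => map (fun c => - c) (coefs a)
  | EZero => [::]
  end.

Fixpoint evl (M : zmodType) (env : seq M) (s : seq int) : M :=
  match s with
  | [::] => 0
  | c :: s' => head 0 env *~ c + evl M (behead env) s'
  end.
Arguments evl {M} env s.

Lemma evl_add (M : zmodType) (s1 s2 : seq int) (env : seq M) :
  evl env (addl s1 s2) = evl env s1 + evl env s2.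
Proof.
elim: s1 s2 env => [|a s1 IH] [|b s2] env /=; rewrite ?add0r ?addr0 //.
by rewrite IH mulrzDr addrACA.
Qed.

Lemma evl_opp (M : zmodType) (s : seq int) (env : seq M) :
  evl env (map (fun c => - c) s) = - evl env s.
Proof.
elim: s env => [|a s IH] env /=; first by rewrite oppr0.
by rewrite IH mulrNz opprD.
Qed.

Lemma evl_at (M : zmodType) n (env : seq M) :
  evl env (rcons (nseq n 0) 1) = nth 0 env n.
Proof.
elim: n env => [|n IH] [|a env] /=.
all: try (rewrite IH; clear IH).
all: rewrite /= ?mulr1z ?mulr0z ?addr0 ?add0r ?nth_nil //.

Qed.

Lemma eval_coefs (M : zmodType) (env : seq M) e : eval env e = evl env (coefs e).
Proof.
elim: e => [n|a IHa b IHb|a IHa|] /=.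
- by rewrite evl_at.
- by rewrite evl_add IHa IHb.
- by rewrite evl_opp IHa.
- by [].
Qed.

Lemma evl_zero (M : zmodType) (env : seq M) s :
  all (fun c => c == 0) s -> evl env s = 0.
Proof.
elim: s env => [|a s IH] env //= /andP [/eqP -> Hs].
by rewrite mulr0z add0r IH.
Qed.

Definition check (e1 e2 : ex) : bool :=
  all (fun c => c == 0) (addl (coefs e1) (map (fun c => - c) (coefs e2))).

Lemma check_ok (M : zmodType) (env : seq M) e1 e2 :
  check e1 e2 -> eval env e1 = eval env e2.
Proof.
move=> H; apply/eqP; rewrite -subr_eq0; apply/eqP.
by rewrite !eval_coefs -evl_opp -evl_add evl_zero.
Qed.

Ltac find_idx a env :=
  lazymatch env with
  | a :: _ => constr:(0%N)
  | _ :: ?l => let n := find_idx a l in constr:(n.+1)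
  end.

Ltac mem_env a env :=
  lazymatch env with
  | a :: _ => constr:(true)
  | _ :: ?l => mem_env a l
  | _ => constr:(false)
  end.

Ltac reify env t :=
  lazymatch t with
  | @Algebra.add _ ?a ?b =>
      let r := reify env a in
      lazymatch r with (?env1, ?ea) =>
        let r2 := reify env1 b in
        lazymatch r2 with (?env2, ?eb) => constr:((env2, EAdd ea eb)) end end
  | @Algebra.opp _ ?a =>
      let r := reify env a in
      lazymatch r with (?env1, ?ea) => constr:((env1, EOpp ea)) end
  | @Algebra.zero _ => constr:((env, EZero))
  | _ =>
      let b := mem_env t env in
      lazymatch b with
      | true => let n := find_idx t env in constr:((env, EAt n))
      | false =>
          let env' := eval cbv [rcons] in (rcons env t) in
          let n := find_idx t env' in constr:((env', EAt n))
      end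
  end.

Ltac zmod_norm :=
  lazymatch goal with
  | |- @eq ?T ?L ?R =>
      let r := reify (@nil T) L in
      lazymatch r with (?env1, ?eL) =>
        let r2 := reify env1 R in
        lazymatch r2 with (?env2, ?eR) =>
          change (eval env2 eL = eval env2 eR);
          apply: check_ok; vm_compute; reflexivity
        end end
  end.


Section S.
Variables (K : fieldType) (A : lmodType K).

Lemma bilDl (f : A -> A -> A) : bilinear_map f -> forall x y z, f (x + y) z = f x z + f y z.
Proof. by case=> H _ x y z; rewrite -{1}[x]scale1r H scale1r. Qed.
Lemma bilDr (f : A -> A -> A) : bilinear_map f -> forall x y z, f z (x + y) = f z x + f z y.
Proof. by case=> _ H x y z; rewrite -{1}[x]scale1r H scale1r. Qed.
Lemma bil0l (f : A -> A -> A) : bilinear_map f -> forall z, f 0 z = 0.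
Proof. move=> Hf z; apply: (@addrI _ (f 0 z)); by rewrite -bilDl // !addr0. Qed.
Lemma bil0r (f : A -> A -> A) : bilinear_map f -> forall z, f z 0 = 0.
Proof. move=> Hf z; apply: (@addrI _ (f z 0)); by rewrite -bilDr // !addr0. Qed.
Lemma bilNl (f : A -> A -> A) : bilinear_map f -> forall x z, f (- x) z = - f x z.
Proof. move=> Hf x z; apply: (@addrI _ (f x z)); by rewrite -bilDl // !subrr bil0l. Qed.
Lemma bilNr (f : A -> A -> A) : bilinear_map f -> forall x z, f z (- x) = - f z x.
Proof. move=> Hf x z; apply: (@addrI _ (f z x)); by rewrite -bilDr // !subrr bil0r. Qed.
Lemma linD (f : A -> A) : linear_map f -> forall x y, f (x + y) = f x + f y.
Proof. by move=> H x y; rewrite -{1}[x]scale1r H scale1r. Qed.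
Lemma lin0 (f : A -> A) : linear_map f -> f 0 = 0.
Proof. move=> Hf; apply: (@addrI _ (f 0)); by rewrite -linD // !addr0. Qed.
Lemma linN (f : A -> A) : linear_map f -> forall x, f (- x) = - f x.
Proof. move=> Hf x; apply: (@addrI _ (f x)); by rewrite -linD // !subrr lin0. Qed.

Definition iscst (w : series A) (z : A) := forall n, w n = if n is 0 then z else 0.
Definition cst (x : A) : series A := fun n => if n is 0 then x else 0.
Lemma cstP x : iscst (cst x) x. Proof. by case. Qed.
Lemma cstA (al : A -> A) x : linear_map al -> iscst (ser_map al (cst x)) (al x).
Proof. by move=> H [|n]; rewrite /ser_map /cst ?lin0. Qed.

Lemma serR (op : nat -> A -> A -> A) (Hb : forall i, bilinear_map (op i)) u w z
  (Hw : iscst w z) n :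
  ser_op op u w n = \sum_(i < n.+1) op i (u (n - i)%N) z.
Proof.
rewrite /ser_op; apply: eq_bigr => i _.
rewrite big_ord_recr /= subnn Hw big1 ?add0r // => j _.
rewrite Hw; case E: (n - i - j)%N => [|k]; last by rewrite bil0r.
have := ltn_ord j; lia.
Qed.

Lemma serL (op : nat -> A -> A -> A) (Hb : forall i, bilinear_map (op i)) u v x
  (Hu : iscst u x) n :
  ser_op op u v n = \sum_(i < n.+1) op i x (v (n - i)%N).
Proof.
rewrite /ser_op; apply: eq_bigr => i _.
rewrite big_ord_recl /= subn0 Hu big1 ?addr0 // => j _.
by rewrite Hu /= bil0l.
Qed.

Lemma serC (op : nat -> A -> A -> A) (Hb : forall i, bilinear_map (op i)) u v x y
  (Hu : iscst u x) (Hv : iscst v y) n :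
  ser_op op u v n = op n x y.
Proof.
rewrite (@serR op Hb u v y Hv) big_ord_recr /= subnn Hu big1 ?add0r // => i _.
rewrite Hu; case E: (n - i)%N => [|k]; last by rewrite bil0l.
have := ltn_ord i; lia.
Qed.

End S.
Arguments iscst {K A}.
Arguments serL {K A op} Hb {u v x} Hu n.
Arguments serR {K A op} Hb {u w z} Hw n.
Arguments serC {K A op} Hb {u v x y} Hu Hv n.
Arguments cstA {K A al} x _.
Arguments cstP {K A} x.
Arguments bilDl {K A f} _ x y z.
Arguments bilDr {K A f} _ x y z.
Arguments bilNl {K A f} _ x z.
Arguments bilNr {K A f} _ x z.
Arguments bil0l {K A f} _ z.
Arguments bil0r {K A f} _ z.
Arguments linD {K A f} _ x y.
Arguments linN {K A f} _ x.
Arguments lin0 {K A f} _.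
Arguments cst {K A}.

Lemma addE {M : zmodType} (a b c d : M) : a = b -> c = d -> a + c = b + d.
Proof. by move=> -> ->. Qed.
Lemma oppE {M : zmodType} (a b : M) : a = b -> - a = - b.
Proof. by move=> ->. Qed.
Lemma eq_comb {M : zmodType} (L R l r : M) : l = r -> L - R = l - r -> L = R.
Proof. move=> -> /eqP; by rewrite subrr subr_eq0 => /eqP. Qed.
Arguments addE {M a b c d}.
Arguments oppE {M a b}.
Arguments eq_comb {M L R l r}.

Theorem theorem4p2 (K : fieldType) (A : lmodType K) (dm : A -> A -> A)
  (alpha : A -> A) (prec succ : nat -> A -> A -> A) :
  is_hom_zinbiel dm alpha ->
  is_hom_dend_deformation dm alpha prec succ ->
  is_hom_pre_Poisson dm (fun x y => succ 1%N x y - prec 1%N y x) alpha.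
Proof.
move=> Hz [Hp Hs Hs0 Hp0 [M1 M2 E1 E2 E3]].
have Hz' := Hz; case: Hz' => Hdm Hal Hmz Hzin.
have Hp0' : forall x y, prec 0%N x y = dm y x by move=> x y; rewrite Hp0.
have e1 n (x y z : A) := congr1 (fun s => s n) (E1 (cst x) (cst y) (cst z)).
have e2 n (x y z : A) := congr1 (fun s => s n) (E2 (cst x) (cst y) (cst z)).
have e3 n (x y z : A) := congr1 (fun s => s n) (E3 (cst x) (cst y) (cst z)).
Ltac ex Hs Hp Hal Hdm Hs0 Hp0' :=
  rewrite /= ?(serL Hs (cstA _ Hal)) ?(serL Hp (cstA _ Hal))
    ?(serR Hs (cstA _ Hal)) ?(serR Hp (cstA _ Hal));
  rewrite !big_ord_recr !big_ord0 /= ?subSS ?subn0 ?subnn /ser_add;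
  rewrite ?(serC Hs (cstP _) (cstP _)) ?(serC Hp (cstP _) (cstP _)) ?Hs0 ?Hp0';
  do 4 rewrite ?(bilDl Hdm) ?(bilDr Hdm) ?(bilNl Hdm) ?(bilNr Hdm)
    ?(bilDl (Hs _)) ?(bilDr (Hs _)) ?(bilNl (Hs _)) ?(bilNr (Hs _))
    ?(bilDl (Hp _)) ?(bilDr (Hp _)) ?(bilNl (Hp _)) ?(bilNr (Hp _)) ?add0r.
split => //.
- split => //.
  + case: (Hs 1%N) => Hs1l Hs1r; case: (Hp 1%N) => Hp1l Hp1r.
    split => a x y z; by rewrite ?Hs1l ?Hp1r ?Hs1r ?Hp1l scalerBr opprD addrACA.
  + move=> x y.
    have H1 := congr1 (fun s => s 1%N) (M2 (cst x) (cst y)).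
    have H2 := congr1 (fun s => s 1%N) (M1 (cst y) (cst x)).
    move: H1 H2; rewrite /= {1}/ser_map (serC Hs (cstP x) (cstP y)) (serC Hs (cstA x Hal) (cstA y Hal)).
    rewrite {1}/ser_map (serC Hp (cstP y) (cstP x)) (serC Hp (cstA y Hal) (cstA x Hal)).
    by move=> H1 H2; rewrite (linD Hal) (linN Hal) H1 H2.
  + move=> x y z.
    move: (e3 2%N x y z) (e2 2%N x z y) (e3 2%N y x z) (e2 2%N y z x) (e1 2%N z x y) (e1 2%N z y x).
    ex Hs Hp Hal Hdm Hs0 Hp0'.
    move=> H1 H2 H3 H4 H5 H6.
    apply: (eq_comb (addE (addE (addE (addE (addE (oppE H1) (oppE H2)) H3) H4) H5) (oppE H6))).
    zmod_norm.
- move=> x y z.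
  move: (e3 1%N x y z) (e3 1%N y x z) (e2 1%N y z x).
  ex Hs Hp Hal Hdm Hs0 Hp0'.
  move=> H1 H2 H3.
  apply: (eq_comb (addE (addE (oppE H1) H2) H3)).
  zmod_norm.
- move=> x y z.
  move: (e3 1%N x y z) (e2 1%N x z y) (e1 1%N z x y).
  ex Hs Hp Hal Hdm Hs0 Hp0'.
  move=> H1 H2 H3.
  apply: (eq_comb (addE (addE (oppE H1) (oppE H2)) H3)).
  zmod_norm.
Qed.
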